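(* Let $(r_n),(R_n)$ be real sequences with $(r_n)$ bounded, and $(C_n),(D_n),(d_n)$ complex sequences with $\sum_n(|C_n|^2+|d_nD_n|^2)<\infty$. Assume there are $n'\in\mathbb{N}$, $\mu>0$, $\nu>1/2$ such that $|R_n|\le\mu n^{-\nu}(|C_n|^2+|d_nD_n|^2)^{1/2}$ for all $n\ge n'$. Then for every $n_0\ge n'$ and every $T>0$ there is $c(T)>0$ (depending on $T,\mu,\nu,\sup_n|r_n|$) such that $$\int_{-\infty}^{\infty}k^*(t)\Big|\sum_{n=n_0}^\infty R_ne^{r_nt}\Big|^2dt\le c(T)\sum_{n=n_0}^\infty\big(|C_n|^2+|d_nD_n|^2\big).$$
   Context: For $T>0$, $k^*(t):=\cos\big(\frac{\pi t}{2T}\big)$ for $|t|\le T$ and $k^*(t):=0$ for $|t|>T$. *)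

(* Defs.v *)
From Stdlib Require Import Reals Lra.
Open Scope R_scope.

(* Complex numbers represented as pairs (real part, imaginary part). *)
Definition Cplx : Type := (R * R)%type.
Definition Cmul (z w : Cplx) : Cplx :=
  (fst z * fst w - snd z * snd w, fst z * snd w + snd z * fst w).
Definition Cmod (z : Cplx) : R := sqrt (fst z ^ 2 + snd z ^ 2).

Definition kstar (T t : R) : R :=
  if Rle_dec (Rabs t) T then cos (PI * t / (2 * T)) else 0.

(* Main.v *)
Require Import Defs.
From Stdlib Require Import Reals Lra Lia.
Open Scope R_scope.

Lemma exp_le' x y : x <= y -> exp x <= exp y.
Proof. intros [H|H]. left; apply exp_increasing; auto. subst; lra. Qed.

Lemma ln_le_sub1 y : 0 < y -> ln y <= y - 1.
Proof.
  intros Hy. destruct (Rle_or_lt (ln y) (y-1)) as [H|H]; auto.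
  apply exp_increasing in H. rewrite exp_ln in H by auto.
  pose proof (exp_ineq1_le (y-1)). lra.
Qed.

Lemma tele_step q x : 0 < q -> 1 < x ->
  exp (-(q+1) * ln x) <= (exp (-q * ln (x-1)) - exp (-q * ln x)) / q.
Proof.
  intros Hq Hx.
  assert (Hl : ln (x-1) <= ln x - 1/x).
  { replace (x-1) with (x * ((x-1)/x)) by (field; lra).
    rewrite ln_mult by (try apply Rdiv_lt_0_compat; lra).
    pose proof (ln_le_sub1 ((x-1)/x)).
    assert ((x-1)/x - 1 = - (1/x)) by (field; lra).
    assert (0 < (x-1)/x) by (apply Rdiv_lt_0_compat; lra). lra. }
  assert (H1 : exp (-q * ln x) * exp (q/x) <= exp (-q * ln (x-1))).
  { rewrite <- exp_plus. apply exp_le'.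
    assert (q * ln (x-1) <= q * (ln x - 1/x)) by (apply Rmult_le_compat_l; lra).
    assert (q * (1/x) = q/x) by (field; lra). nra. }
  pose proof (exp_ineq1_le (q/x)).
  assert (E : exp (-(q+1) * ln x) = exp (-q * ln x) / x).
  { replace (-(q+1) * ln x) with (-q * ln x + - ln x) by ring.
    rewrite exp_plus, exp_Ropp, exp_ln by lra. field; lra. }
  rewrite E. pose proof (exp_pos (-q * ln x)) as Hp.
  apply Rmult_le_reg_l with q; auto.
  replace (q * ((exp (- q * ln (x - 1)) - exp (- q * ln x)) / q))
    with (exp (- q * ln (x - 1)) - exp (- q * ln x)) by (field; lra).
  assert (exp (-q * ln x) * (1 + q/x) <= exp (-q * ln x) * exp (q/x))
    by (apply Rmult_le_compat_l; lra).
  assert (q * (exp (- q * ln x) / x) = exp (-q * ln x) * (q/x)) by (field; lra).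
  nra.
Qed.

Lemma Zsum q n0 : 0 < q -> (1 <= n0)%nat -> forall N,
  sum_f_R0 (fun k => exp (-(q+1) * ln (INR (n0+k)))) N
    <= 1 + 1/q - exp (-q * ln (INR (n0+N))) / q.
Proof.
  intros Hq Hn0 N. induction N as [|N IH].
  - simpl. rewrite Nat.add_0_r.
    assert (H1 : 1 <= INR n0) by (apply (le_INR 1); auto).
    assert (0 <= ln (INR n0)).
    { destruct (Req_dec (INR n0) 1) as [E|E]. rewrite E, ln_1; lra.
      rewrite <- ln_1. left. apply ln_increasing; lra. }
    assert (exp (-(q+1) * ln (INR n0)) <= 1).
    { apply Rle_trans with (exp 0); [|rewrite exp_0; lra]. apply exp_le'. pose proof (Rmult_le_pos (q+1) _ ltac:(lra) H).
      replace (-(q+1) * ln (INR n0)) with (-((q+1) * ln (INR n0))) by ring. lra. }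
    assert (exp (-q * ln (INR n0)) <= 1).
    { apply Rle_trans with (exp 0); [|rewrite exp_0; lra]. apply exp_le'. pose proof (Rmult_le_pos q _ ltac:(lra) H).
      replace (-q * ln (INR n0)) with (-(q * ln (INR n0))) by ring. lra. }
    assert (exp (-q * ln (INR n0)) / q <= 1/q).
    { unfold Rdiv. apply Rmult_le_compat_r; auto. left; apply Rinv_0_lt_compat; auto. }
    lra.
  - simpl sum_f_R0.
    assert (Hx : INR (n0 + S N) = INR (n0+N) + 1).
    { rewrite <- S_INR. f_equal. lia. }
    assert (1 <= INR (n0+N)) by (apply (le_INR 1); lia).
    pose proof (tele_step q (INR (n0 + S N)) Hq ltac:(lra)) as T.
    replace (INR (n0 + S N) - 1) with (INR (n0+N)) in T by lra.
    assert ((exp (- q * ln (INR (n0 + N))) - exp (- q * ln (INR (n0 + S N)))) / q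
      = exp (- q * ln (INR (n0 + N)))/q - exp (- q * ln (INR (n0 + S N)))/q) by (field; lra).
    lra.
Qed.

Lemma cv_pos_bounded (b : nat -> R) B : (forall k, 0 <= b k) ->
  (forall N, sum_f_R0 b N <= B) -> {l | Un_cv (fun N => sum_f_R0 b N) l}.
Proof.
  intros Hb HB. apply growing_cv.
  - intro n. simpl. pose proof (Hb (S n)). lra.
  - exists B. intros x [i ->]. apply HB.
Qed.

Lemma lim_abs_bound U L B : Un_cv U L -> (forall N, Rabs (U N) <= B) -> Rabs L <= B.
Proof.
  intros HU HB. destruct (Rle_or_lt (Rabs L) B) as [H|H]; auto.
  destruct (HU (Rabs L - B)) as [N HN]; [lra|].
  specialize (HN N (le_n N)). unfold R_dist in HN.
  pose proof (HB N). pose proof (Rabs_triang_inv L (U N)).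
  rewrite <- Rabs_Ropp in HN. replace (- (U N - L)) with (L - U N) in HN by ring. lra.
Qed.

Lemma eps_sq A K Z l : 0 <= A -> 0 < Z -> 0 <= l -> 0 <= K ->
  (forall e, 0 < e -> A <= K * (Z / e + e * l) / 2) -> A ^ 2 <= K ^ 2 * Z * l.
Proof.
  intros HA HZ Hl HK H.
  destruct Hl as [Hl|Hl].
  - set (s := sqrt Z). set (m := sqrt l).
    assert (Hs : 0 < s) by (apply sqrt_lt_R0; auto).
    assert (Hm : 0 < m) by (apply sqrt_lt_R0; auto).
    assert (Es : s * s = Z) by (apply sqrt_sqrt; lra).
    assert (Em : m * m = l) by (apply sqrt_sqrt; lra).
    specialize (H (s / m) ltac:(apply Rdiv_lt_0_compat; auto)).
    replace (K * (Z / (s / m) + s / m * l) / 2) with (K * s * m) in H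
      by (rewrite <- Es, <- Em; field; lra).
    replace (K ^ 2 * Z * l) with ((K * s * m) ^ 2) by (rewrite <- Es, <- Em; ring).
    apply pow_incr; lra.
  - subst l. destruct HA as [HA|HA].
    + exfalso. destruct HK as [HK|HK].
      * specialize (H (K * Z / A) ltac:(apply Rdiv_lt_0_compat; nra)).
        replace (K * (Z / (K * Z / A) + K * Z / A * 0) / 2) with (A / 2) in H
          by (field; split; nra). lra.
      * subst K. specialize (H 1 ltac:(lra)). lra.
    + subst A. simpl. lra.
Qed.

Theorem proposition5p13 :
  forall (T mu nu M : R),
    0 < T -> 0 < mu -> 1/2 < nu -> 0 <= M ->
    exists c : R, 0 < c /\
    forall (r Rs : nat -> R) (C D d : nat -> Cplx) (n' n0 : nat),
      (forall n, Rabs (r n) <= M) ->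
      (exists L, infinite_sum
         (fun n => Cmod (C n) ^ 2 + Cmod (Cmul (d n) (D n)) ^ 2) L) ->
      (1 <= n')%nat ->
      (forall n, (n' <= n)%nat ->
         Rabs (Rs n) <= mu * Rpower (INR n) (- nu)
                         * sqrt (Cmod (C n) ^ 2 + Cmod (Cmul (d n) (D n)) ^ 2)) ->
      (n' <= n0)%nat ->
      forall l : R,
        infinite_sum
          (fun k => Cmod (C (n0 + k)%nat) ^ 2
                    + Cmod (Cmul (d (n0 + k)%nat) (D (n0 + k)%nat)) ^ 2) l ->
        exists S : R -> R,
          (forall t, infinite_sum
                       (fun k => Rs (n0 + k)%nat * exp (r (n0 + k)%nat * t)) (S t)) /\
          exists pr : Riemann_integrable (fun t => kstar T t * Rabs (S t) ^ 2) (- T) T,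
            RiemannInt pr <= c * l.
Proof.
  intros T mu nu M HT Hmu Hnu HM.
  set (q := 2 * nu - 1).
  assert (Hq : 0 < q) by (unfold q; lra).
  set (Z := 1 + 1 / q).
  assert (HZ : 0 < Z) by (unfold Z; assert (0 < 1/q) by (apply Rdiv_lt_0_compat; lra); lra).
  set (E := exp (M * (T + 1))).
  assert (HE : 0 < E) by apply exp_pos.
  exists (2 * T * (E * mu) ^ 2 * Z). split.
  { assert (0 < (E*mu)^2) by (apply pow_lt; nra). 
    assert (0 < 2 * T * (E*mu)^2) by nra. nra. }
  intros r Rs C D d n' n0 Hr _ Hn' HRs Hn0 l Hl.
  set (a := fun n => Cmod (C n) ^ 2 + Cmod (Cmul (d n) (D n)) ^ 2).
  assert (Ha : forall n, 0 <= a n).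
  { intro n. unfold a. pose proof (pow2_ge_0 (Cmod (C n))).
    pose proof (pow2_ge_0 (Cmod (Cmul (d n) (D n)))). lra. }
  assert (Hl' : forall N, sum_f_R0 (fun k => a (n0 + k)%nat) N <= l).
  { intro N. apply sum_incr; [exact Hl | intro; apply Ha]. }
  assert (Hl0 : 0 <= l) by (pose proof (Hl' 0%nat); simpl in *; pose proof (Ha (n0+0)%nat); lra).
  assert (HsumRs : forall e, 0 < e -> forall N,
    sum_f_R0 (fun k => Rabs (Rs (n0 + k)%nat)) N <= mu * (Z / e + e * l) / 2).
  { intros e He N.
    apply Rle_trans with (sum_f_R0 (fun k => mu * (exp (-(q+1) * ln (INR (n0+k))) / e
                                              + e * a (n0 + k)%nat) / 2) N).
    - apply sum_Rle. intros k _.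
      eapply Rle_trans; [apply HRs; lia|].
      unfold Rpower. set (u := exp (- nu * ln (INR (n0 + k)))).
      assert (Hu : u * u = exp (-(q+1) * ln (INR (n0 + k)))).
      { unfold u. rewrite <- exp_plus. f_equal. unfold q. ring. }
      rewrite <- Hu. fold (a (n0 + k)%nat).
      set (s := sqrt (a (n0 + k)%nat)).
      assert (Hs : s * s = a (n0 + k)%nat) by (apply sqrt_sqrt; apply Ha).
      rewrite <- Hs.
      assert (0 <= s) by apply sqrt_pos.
      assert (0 <= u) by (left; apply exp_pos).
      assert (2 * u * s <= (u * u) / e + e * (s * s)).
      { apply Rmult_le_reg_l with e; auto.
        replace (e * ((u * u) / e + e * (s * s))) with (u*u + e*e*(s*s)) by (field; lra).
        pose proof (pow2_ge_0 (u - e*s)). nra. }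
      nra.
    - assert (Hlin : forall N, sum_f_R0 (fun k => mu * (exp (-(q+1) * ln (INR (n0+k))) / e
                                              + e * a (n0 + k)%nat) / 2) N
         = mu * (sum_f_R0 (fun k => exp (-(q+1) * ln (INR (n0+k)))) N / e
                 + e * sum_f_R0 (fun k => a (n0 + k)%nat) N) / 2).
      { induction N0 as [|N0 IH]; simpl; [reflexivity|]. rewrite IH. field. lra. }
      rewrite Hlin.
      pose proof (Zsum q n0 Hq ltac:(lia) N) as HZs.
      assert (0 <= exp (- q * ln (INR (n0 + N))) / q)
        by (unfold Rdiv; apply Rmult_le_pos; [left; apply exp_pos| left; apply Rinv_0_lt_compat; lra]).
      assert (sum_f_R0 (fun k => exp (-(q+1) * ln (INR (n0+k)))) N / e <= Z / e)
        by (unfold Rdiv; apply Rmult_le_compat_r; [left; apply Rinv_0_lt_compat; lra| unfold Z; lra]).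
      pose proof (Hl' N).
      assert (e * sum_f_R0 (fun k => a (n0 + k)%nat) N <= e * l) by (apply Rmult_le_compat_l; lra).
      nra. }
  set (fn := fun k t => Rs (n0 + k)%nat * exp (r (n0 + k)%nat * t)).
  assert (Hfn : forall k t rho, Rabs t <= rho ->
     Rabs (fn k t) <= Rabs (Rs (n0 + k)%nat) * exp (M * rho)).
  { intros k t rho Ht. unfold fn. rewrite Rabs_mult.
    rewrite (Rabs_pos_eq (exp _)) by (left; apply exp_pos).
    apply Rmult_le_compat_l; [apply Rabs_pos|]. apply exp_le'.
    apply Rle_trans with (Rabs (r (n0+k)%nat * t)); [apply Rle_abs|].
    rewrite Rabs_mult. apply Rmult_le_compat; auto; apply Rabs_pos. }
  assert (Habs : forall e, 0 < e -> forall rho t N, Rabs t <= rho ->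
     sum_f_R0 (fun k => Rabs (fn k t)) N <= exp (M * rho) * (mu * (Z / e + e * l) / 2)).
  { intros e He rho t N Ht.
    apply Rle_trans with (sum_f_R0 (fun k => Rabs (Rs (n0 + k)%nat) * exp (M * rho)) N).
    - apply sum_Rle. intros; apply Hfn; auto.
    - rewrite <- scal_sum. apply Rmult_le_compat_l; [left; apply exp_pos|]. apply HsumRs; auto. }
  assert (cv : forall x, {L | Un_cv (fun N => SP fn N x) L}).
  { intro x.
    assert (cvabs : {L | Un_cv (fun N => sum_f_R0 (fun k => Rabs (fn k x)) N) L}).
    { apply (cv_pos_bounded _ (exp (M * Rabs x) * (mu * (Z / 1 + 1 * l) / 2))).
      - intro; apply Rabs_pos.
      - intro N. apply Habs; [lra| apply Rle_refl]. }
    apply R_complete. apply cauchy_abs. apply cv_cauchy_1. exact cvabs. }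
  exists (SFL fn cv). split.
  { intro t. unfold SFL. destruct (cv t) as [L HL]. exact HL. }
  set (Sf := SFL fn cv).
  assert (HT1 : 0 < T + 1) by lra.
  set (rho := mkposreal (T + 1) HT1).
  assert (Hcvn : CVN_r fn rho).
  { destruct (cv_pos_bounded (fun k => Rabs (Rabs (Rs (n0 + k)%nat) * exp (M * (T + 1))))
      (exp (M * (T+1)) * (mu * (Z / 1 + 1 * l) / 2))) as [L HL].
    - intro; apply Rabs_pos.
    - intro N.
      apply Rle_trans with (sum_f_R0 (fun k => Rabs (Rs (n0 + k)%nat) * exp (M * (T + 1))) N).
      + apply sum_Rle. intros k _. rewrite Rabs_pos_eq; [lra|].
        apply Rmult_le_pos; [apply Rabs_pos| left; apply exp_pos].
      + rewrite <- scal_sum. apply Rmult_le_compat_l; [left; apply exp_pos|].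
        apply HsumRs; lra.
    - exists (fun k => Rabs (Rs (n0 + k)%nat) * exp (M * (T + 1))). exists L. split; [exact HL|].
      intros n y Hy. apply Hfn. unfold Boule in Hy. simpl in Hy.
      rewrite Rminus_0_r in Hy. lra. }
  pose proof (CVN_CVU fn cv rho Hcvn) as Hcvu.
  assert (Hcont : forall y, Rabs y <= T -> continuity_pt Sf y).
  { intros y Hy. apply (CVU_continuity _ _ 0 rho Hcvu).
    - intros n z _. induction n as [|n IH].
      + unfold SP, fn. simpl. reg.
      + unfold SP in *. simpl.
        apply (continuity_pt_plus (fun y => sum_f_R0 (fun k => fn k y) n) (fun y => fn (S n) y)); auto.
        unfold fn. reg.
    - unfold Boule. simpl. rewrite Rminus_0_r. lra. }
  set (g := fun t => cos (PI * t / (2 * T)) * Rabs (Sf t) ^ 2).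
  assert (Hg : Riemann_integrable g (- T) T).
  { apply continuity_implies_RiemannInt; [lra|]. intros x Hx.
    assert (Hx' : Rabs x <= T) by (apply Rabs_le; lra).
    unfold g. apply (continuity_pt_mult (fun t => cos (PI * t / (2 * T))) (fun t => Rabs (Sf t) ^ 2)).
    - reg.
    - change (fun t => Rabs (Sf t) ^ 2) with (comp (fun u => u ^ 2) (comp Rabs Sf)).
      apply continuity_pt_comp; [apply continuity_pt_comp; [apply Hcont; auto| apply Rcontinuity_abs]|].
      apply derivable_continuous_pt, derivable_pt_pow. }
  assert (Hkg : forall x, Rmin (- T) T <= x <= Rmax (- T) T ->
     g x = kstar T x * Rabs (Sf x) ^ 2).
  { intros x Hx. rewrite Rmin_left in Hx by lra. rewrite Rmax_right in Hx by lra.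
    unfold kstar, g. destruct (Rle_dec (Rabs x) T) as [_|n]; [reflexivity|].
    exfalso; apply n; apply Rabs_le; lra. }
  exists (@Riemann_integrable_ext g (fun t => kstar T t * Rabs (Sf t) ^ 2) (-T) T Hkg Hg).
  set (K := (E * mu) ^ 2 * Z * l).
  assert (Hb : forall x, - T < x < T -> 0 <= kstar T x * Rabs (Sf x) ^ 2 <= K).
  { intros x Hx.
    assert (Hx' : Rabs x <= T) by (apply Rabs_le; lra).
    assert (Hk : 0 <= kstar T x <= 1).
    { unfold kstar. destruct (Rle_dec (Rabs x) T) as [_|n]; [|lra].
      split; [|apply COS_bound].
      set (w := x / T). assert (Ew : x = w * T) by (unfold w; field; lra).
      assert (-1 <= w <= 1) by (rewrite Ew in Hx; split; nra).
      replace (PI * x / (2 * T)) with (PI / 2 * w) by (rewrite Ew; field; lra).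
      pose proof PI_RGT_0. apply cos_ge_0; nra. }
    assert (HA : Rabs (Sf x) ^ 2 <= K).
    { apply eps_sq; auto; [apply Rabs_pos| nra|].
      intros e He. unfold Sf, SFL. destruct (cv x) as [L HL].
      apply (lim_abs_bound _ _ _ HL). intro N.
      eapply Rle_trans; [apply Rsum_abs|].
      eapply Rle_trans; [apply (Habs e He (T+1)); lra|]. unfold E. lra. }
    pose proof (pow2_ge_0 (Rabs (Sf x))). nra. }
  destruct (@RiemannInt_const_bound _ _ _ 0 K (@Riemann_integrable_ext g (fun t => kstar T t * Rabs (Sf t) ^ 2) (-T) T Hkg Hg)
              ltac:(lra) Hb) as [_ HI].
  unfold K in HI. nra.
Qed.
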